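(* Let $\mathbf a,\mathbf b\in\mathbb R^n$ be nonzero, $L$ a positive integer, $\tilde{\mathbf a}=\textsc{Round}(\mathbf a/\|\mathbf a\|,L)$, $\tilde{\mathbf b}=\textsc{Round}(\mathbf b/\|\mathbf b\|,L)$, $\mathbf a'=\|\mathbf a\|\tilde{\mathbf a}$, $\mathbf b'=\|\mathbf b\|\tilde{\mathbf b}$, and $\mathcal I=\{i:\mathbf a[i]\neq0\text{ and }\mathbf b[i]\neq0\}$. Then: (1) for all $i$, $\mathbf a'[i]^2/\|\mathbf a'\|^2$ and $\mathbf b'[i]^2/\|\mathbf b'\|^2$ are integer multiples of $1/L$; (2) for any $L$, sample number $m$ and random seed $s$, the Weighted MinHash sketch yields identical outputs on $\mathbf a$ and $\mathbf a'$ and on $\mathbf b$ and $\mathbf b'$, i.e. $W_{\mathbf a}=W_{\mathbf a'}$ and $W_{\mathbf b}=W_{\mathbf b'}$; (3) for $\epsilon\in(0,1)$ and $L\ge 9n^6/\epsilon^2$, $|\langle\mathbf a,\mathbf b\rangle-\langle\mathbf a',\mathbf b'\rangle|\le\epsilon\max(\|\mathbf a_{\mathcal I}\|\|\mathbf b\|,\|\mathbf a\|\|\mathbf b_{\mathcal I}\|)$; (4) for $L\ge n^3$, $\max(\|\mathbf a'_{\mathcal I}\|\|\mathbf b'\|,\|\mathbf a'\|\|\mathbf b'_{\mathcal I}\|)\le 2\max(\|\mathbf a_{\mathcal I}\|\|\mathbf b\|,\|\mathbf a\|\|\mathbf b_{\mathcal I}\|)$.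
   Context: $\|\cdot\|$ is the Euclidean norm; $\mathbf a_{\mathcal I}$ is $\mathbf a$ restricted to indices in $\mathcal I$. Rounding procedure $\textsc{Round}(\mathbf z,L)$ for a unit vector $\mathbf z\in\mathbb R^n$: set $\tilde{\mathbf z}[i]=\operatorname{sign}(\mathbf z[i])\sqrt{\lfloor \mathbf z[i]^2L\rfloor/L}$ for all $i$; let $i^*=\arg\max_i|\mathbf z[i]|$; set $\delta=1-\|\tilde{\mathbf z}\|^2$ and replace $\tilde{\mathbf z}[i^*]$ by $\operatorname{sign}(\mathbf z[i^*])\sqrt{\tilde{\mathbf z}[i^*]^2+\delta}$; return $\tilde{\mathbf z}$. Weighted MinHash sketch of $\mathbf a$ (sample number $m$, seed $s$, integer $L$): set $\tilde{\mathbf a}=\textsc{Round}(\mathbf a/\|\mathbf a\|,L)$. For each $i\in\{1,\dots,n\}$ let $\bar{\mathbf a}^{(i)}\in\mathbb R^L$ have its first $\tilde{\mathbf a}[i]^2L$ entries equal to $\tilde{\mathbf a}[i]$ and the rest $0$, and let $\bar{\mathbf a}=[\bar{\mathbf a}^{(1)},\dots,\bar{\mathbf a}^{(n)}]\in\mathbb R^{nL}$. For $i=1,\dots,m$, using seed $s$ select a fully random hash function $h^i:\{1,\dots,nL\}\to[0,1]$ (determined by $s$), let $j^*=\arg\min_{j:\bar{\mathbf a}[j]\neq0}h^i(j)$, and set $W^{hash}_{\mathbf a}[i]=h^i(j^* )$, $W^{val}_{\mathbf a}[i]=\bar{\mathbf a}[j^*]$. The sketch is $W_{\mathbf a}=\{W^{hash}_{\mathbf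 a},W^{val}_{\mathbf a},\|\mathbf a\|\}$. *)

(* Defs.v *)
From HB Require Import structures.
From mathcomp Require Import all_boot all_order all_algebra.
From mathcomp Require Import reals.
Set Implicit Arguments. Unset Strict Implicit. Unset Printing Implicit Defensive.
Import Order.TTheory GRing.Theory Num.Theory.
Local Open Scope ring_scope.

Section Defs.
Variable R : realType.
Variable n : nat.

Definition dotv (u v : 'rV[R]_n) : R := \sum_(i < n) u 0 i * v 0 i.
Definition vnorm (v : 'rV[R]_n) : R := Num.sqrt (\sum_(i < n) v 0 i ^+ 2).
Definition rnorm (I : {set 'I_n}) (v : 'rV[R]_n) : R :=
  Num.sqrt (\sum_(i in I) v 0 i ^+ 2).

Definition round0 (z : 'rV[R]_n) (L : nat) : 'rV[R]_n :=
  \row_i (Num.sg (z 0 i) * Num.sqrt ((Num.floor (z 0 i ^+ 2 * L%:R))%:~R / L%:R)).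
Definition istar (z : 'rV[R]_n) : option 'I_n :=
  [pick i | [forall j, `|z 0 j| <= `|z 0 i|]].
Definition Round (z : 'rV[R]_n) (L : nat) : 'rV[R]_n :=
  let zt := round0 z L in
  let delta := 1 - vnorm zt ^+ 2 in
  \row_i (if istar z == Some i
          then Num.sg (z 0 i) * Num.sqrt (zt 0 i ^+ 2 + delta)
          else zt 0 i).

(* The nL coordinates of abar are indexed by pairs (i, k) : 'I_n * 'I_L,
   block i, position k within the block. abar[(i,k)] = ta[i] if k < ta[i]^2 L
   (ta[i]^2 L is an integer; we take its floor to obtain the count). *)
Definition abar (L : nat) (ta : 'rV[R]_n) (j : 'I_n * 'I_L) : R :=
  if ((j.2 : int) < Num.floor (ta 0 j.1 ^+ 2 * L%:R))%R then ta 0 j.1 else 0.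

Definition jstar (L : nat) (ta : 'rV[R]_n) (h : 'I_n * 'I_L -> R)
  : option ('I_n * 'I_L) :=
  [pick j | (abar ta j != 0) &&
            [forall k, (abar ta k != 0) ==> (h j <= h k)]].

(* W_a = (W^hash_a, W^val_a, ||a||), hash functions h^1..h^m given by h *)
Definition sketch (L m : nat) (h : 'I_m -> 'I_n * 'I_L -> R) (a : 'rV[R]_n)
  : 'rV[R]_m * 'rV[R]_m * R :=
  let ta := Round ((vnorm a)^-1 *: a) L in
  (\row_(i < m) (match jstar ta (h i) with Some j => h i j | None => 0 end),
   \row_(i < m) (match jstar ta (h i) with Some j => abar ta j | None => 0 end),
   vnorm a).

End Defs.

(* Main.v *)
Require Import Defs.
From HB Require Import structures.
From mathcomp Require Import all_boot all_order all_algebra.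
From mathcomp Require Import reals.
From mathcomp Require Import ring lra.
Import Order.TTheory GRing.Theory Num.Theory.
Local Open Scope ring_scope.

Lemma sq_le (R : realType) (x y : R) : 0 <= y -> x ^+ 2 <= y ^+ 2 -> x <= y.
Proof. move=> y0 h; rewrite leNgt; apply/negP => hxy; nra. Qed.

Lemma sqdiff (R : realType) (x y c : R) : 0 <= x -> 0 <= y ->
  x ^+ 2 - y ^+ 2 <= c -> y ^+ 2 - x ^+ 2 <= c -> (x - y) ^+ 2 <= c.
Proof.
move=> x0 y0 h1 h2; case: (lerP y x) => hxy; nra.
Qed.

Section RoundProps.
Variables (R : realType) (n L : nat) (z : 'rV[R]_n).
Hypothesis Lpos : (0 < L)%N.
Hypothesis z1 : \sum_(i < n) z 0 i ^+ 2 = 1.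

Let LR : R := L%:R.
Lemma LR_gt0 : 0 < LR. Proof. by rewrite /LR ltr0n. Qed.

Definition fl i := Num.floor (z 0 i ^+ 2 * LR).

Lemma fl_ge0 i : 0 <= fl i.
Proof. by rewrite /fl floor_ge0 mulr_ge0 // ?sqr_ge0 // ler0n. Qed.

Lemma fl_le i : (fl i)%:~R <= z 0 i ^+ 2 * LR.
Proof. exact: floor_le. Qed.

Lemma fl_gt i : z 0 i ^+ 2 * LR < (fl i)%:~R + 1.
Proof. by have := floorD1_gt (z 0 i ^+ 2 * LR); rewrite intrD. Qed.

Lemma r2 i : round0 z L 0 i ^+ 2 = (fl i)%:~R / LR.
Proof.
rewrite mxE exprMn sqr_sg sqr_sqrtr; last first.
  by rewrite divr_ge0 ?ler0n // ler0z fl_ge0.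
case: eqP => [h|_]; last by rewrite mul1r.
by rewrite /fl h expr0n /= !mul0r floor0 mul0r.
Qed.

Lemma r2_le i : round0 z L 0 i ^+ 2 <= z 0 i ^+ 2.
Proof.
rewrite r2 ler_pdivrMr ?LR_gt0 //; exact: fl_le.
Qed.

Lemma r2_ge i : z 0 i ^+ 2 <= round0 z L 0 i ^+ 2 + LR^-1.
Proof.
rewrite r2; have -> : (fl i)%:~R / LR + LR^-1 = ((fl i)%:~R + 1) / LR by rewrite mulrDl mul1r.
rewrite ler_pdivlMr ?LR_gt0 //; exact: ltW (fl_gt i).
Qed.

Definition delta := 1 - vnorm (round0 z L) ^+ 2.

Lemma sumr2 : vnorm (round0 z L) ^+ 2 = \sum_i round0 z L 0 i ^+ 2.
Proof. by rewrite /vnorm sqr_sqrtr // sumr_ge0 // => i _; rewrite sqr_ge0. Qed.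

Lemma delta_ge0 : 0 <= delta.
Proof.
rewrite /delta sumr2 subr_ge0 -z1; apply: ler_sum => i _; exact: r2_le.
Qed.

Lemma delta_le : delta <= n%:R / LR.
Proof.
have -> : n%:R / LR = \sum_(i < n) LR^-1.
  by rewrite sumr_const card_ord mulr_natl.
rewrite /delta sumr2 lerBlDr {1}(esym z1).
rewrite -big_split /=; apply: ler_sum => i _; rewrite addrC; exact: r2_ge.
Qed.

Lemma n_gt0 : (0 < n)%N.
Proof. by case: n z z1 => // z' ; rewrite big_ord0 => /eqP; rewrite eq_sym oner_eq0. Qed.

Lemma istarP : exists s, istar z = Some s /\ forall j, `|z 0 j| <= `|z 0 s|.
Proof.
have i0 : 'I_n by exact: Ordinal n_gt0.
pose s := [arg max_(i > i0) `|z 0 i|]%O.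
have Hs : forall j, `|z 0 j| <= `|z 0 s|.
  by rewrite /s; case: arg_maxP => // i _ H j; exact: H.
rewrite /istar; case: pickP => [s' /forallP Hs'| H]; first by exists s'.
by move: (H s) => /forallP; case; exact: Hs.
Qed.


Variable s : 'I_n.
Hypothesis hs : istar z = Some s.
Hypothesis hmax : forall j, `|z 0 j| <= `|z 0 s|.

Let t := Round z L.

Lemma t_ne i : i != s -> t 0 i = round0 z L 0 i.
Proof.
move=> h; rewrite /t /Round mxE hs.
have -> : (Some s == Some i) = false by apply/eqP => -[e]; rewrite e eqxx in h.
by [].
Qed.

Lemma t_s : t 0 s = Num.sg (z 0 s) * Num.sqrt (round0 z L 0 s ^+ 2 + delta).
Proof. by rewrite /t /Round mxE hs eqxx. Qed.

Lemma zs_ne0 : z 0 s != 0.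
Proof.
apply/negP => /eqP h; move: z1; rewrite big1 => [/eqP|j _]; first by rewrite eq_sym oner_eq0.
by have := hmax j; rewrite h normr0 normr_le0 => /eqP ->; rewrite expr0n.
Qed.

Lemma zs2 : 1 <= n%:R * z 0 s ^+ 2.
Proof.
have -> : n%:R * z 0 s ^+ 2 = \sum_(j < n) z 0 s ^+ 2 by rewrite sumr_const card_ord mulr_natl.
rewrite -{1}z1.
apply: ler_sum => j _; have := hmax j.
rewrite -(real_normK (num_real (z 0 j))) -(real_normK (num_real (z 0 s))).
move=> h; have := normr_ge0 (z 0 j); nra.
Qed.

Lemma t2 i : t 0 i ^+ 2 = round0 z L 0 i ^+ 2 + (i == s)%:R * delta.
Proof.
case: (eqVneq i s) => [->|h]; last by rewrite t_ne // mul0r addr0.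
rewrite t_s exprMn sqr_sg zs_ne0 mul1r mul1r sqr_sqrtr //.
by rewrite addr_ge0 ?sqr_ge0 ?delta_ge0.
Qed.

Lemma sum_t2 : \sum_i t 0 i ^+ 2 = 1.
Proof.
under eq_bigr do rewrite t2.
rewrite big_split /=.
have -> : \sum_i (i == s)%:R * delta = delta.
  by rewrite (bigD1 s) //= eqxx mul1r big1 ?addr0 // => j hj; rewrite (negbTE hj) mul0r.
by rewrite -sumr2 /delta; lra.
Qed.

Lemma t2_ge i : round0 z L 0 i ^+ 2 <= t 0 i ^+ 2.
Proof. by rewrite t2 lerDl mulr_ge0 ?ler0n ?delta_ge0. Qed.

Lemma t2_le i : t 0 i ^+ 2 <= round0 z L 0 i ^+ 2 + delta.
Proof.
rewrite t2 lerD2l; have := delta_ge0; case: (i == s) => /=; lra.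
Qed.

Lemma t_zero i : z 0 i = 0 -> t 0 i = 0.
Proof.
move=> h; have hi : i != s by apply/eqP => e; move: zs_ne0; rewrite -e h eqxx.
by rewrite t_ne // mxE h sgr0 mul0r.
Qed.

Lemma t_form i : exists q, 0 <= q /\ t 0 i = Num.sg (z 0 i) * Num.sqrt q.
Proof.
case: (eqVneq i s) => [->|h].
  exists (round0 z L 0 s ^+ 2 + delta); split; last exact: t_s.
  by rewrite addr_ge0 ?sqr_ge0 ?delta_ge0.
rewrite t_ne // mxE; eexists; split; last reflexivity.
by rewrite divr_ge0 ?ler0n // ler0z fl_ge0.
Qed.

Lemma n_ge1 : 1 <= n%:R :> R.
Proof. by rewrite ler1n n_gt0. Qed.

Lemma zt_diff i : (z 0 i - t 0 i) ^+ 2 <= n%:R / LR.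
Proof.
have hnL : 0 <= n%:R / LR by rewrite divr_ge0 ?ler0n.
case: (eqVneq (z 0 i) 0) => [h|h].
  by rewrite t_zero // h subrr expr0n.
have [q [q0 tE]] := t_form i.
have tq : t 0 i ^+ 2 = q by rewrite tE exprMn sqr_sg h mul1r sqr_sqrtr.
have hinv : LR^-1 <= n%:R / LR.
  by rewrite ler_peMl ?n_ge1 // invr_ge0 ltW ?LR_gt0.
have h1 := t2_ge i; have h2 := t2_le i; have h3 := r2_ge i; have h4 := r2_le i.
have h5 := delta_le.
rewrite tE {1}(numEsg (z 0 i)) -mulrBr exprMn sqr_sg h mul1r.
apply: sqdiff => //; rewrite ?sqrtr_ge0 // real_normK ?num_real // sqr_sqrtr // -tq; lra.
Qed.

Lemma t2_le1 i : t 0 i ^+ 2 <= 1.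
Proof.
rewrite -sum_t2 (bigD1 i) //= lerDl sumr_ge0 // => j _; exact: sqr_ge0.
Qed.

Lemma t2_le2 i : (n ^ 3 <= L)%N -> t 0 i ^+ 2 <= 2 * z 0 i ^+ 2.
Proof.
move=> hL; have h1 := t2_le i; have h4 := r2_le i; have h5 := delta_le.
have hz := sqr_ge0 (z 0 i).
case: (eqVneq i s) => [e|ne]; last first.
  by rewrite t2 (negbTE ne) mul0r addr0; lra.
rewrite e in h1 h4 hz *.
have hz1 := zs2; have hn := n_ge1.
have hL' : n%:R ^+ 3 <= LR by rewrite /LR -natrX ler_nat.
have hnL : n%:R / LR <= z 0 s ^+ 2.
  rewrite ler_pdivrMr ?LR_gt0 //.
  have a1 : z 0 s ^+ 2 * n%:R ^+ 3 <= z 0 s ^+ 2 * LR by rewrite ler_wpM2l.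
  have a2 : n%:R ^+ 2 * 1 <= n%:R ^+ 2 * (n%:R * z 0 s ^+ 2).
    by rewrite ler_wpM2l // sqr_ge0.
  have a3 : n%:R * 1 <= n%:R * n%:R :> R by rewrite ler_wpM2l // (le_trans _ hn).
  have e3 : z 0 s ^+ 2 * n%:R ^+ 3 = n%:R ^+ 2 * (n%:R * z 0 s ^+ 2) by ring.
  rewrite e3 in a1.
  rewrite expr2 in a2; lra.
lra.
Qed.

Lemma t_int i : exists k : int, t 0 i ^+ 2 = k%:~R / LR.
Proof.
rewrite t2 r2; case: (eqVneq i s) => [->|ne]; last by exists (fl i); rewrite mul0r addr0.
exists (fl s + (L%:Z - \sum_j fl j)); rewrite mul1r /delta sumr2.
under eq_bigr do rewrite r2.
rewrite -mulr_suml intrD intrB rmorph_sum /= -pmulrn.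
have := LR_gt0; rewrite /LR => hL.
field; exact: lt0r_neq0.
Qed.

Lemma t2_cases i : t 0 i ^+ 2 <= z 0 i ^+ 2 \/ 1 <= n%:R * z 0 i ^+ 2.
Proof.
case: (eqVneq i s) => [->|ne]; first by right; exact: zs2.
by left; rewrite t2 (negbTE ne) mul0r addr0; exact: r2_le.
Qed.

Lemma pack_s :
  [/\ \sum_i t 0 i ^+ 2 = 1, (forall i, exists k : int, t 0 i ^+ 2 = k%:~R / LR),
      (forall i, z 0 i = 0 -> t 0 i = 0), (forall i, (z 0 i - t 0 i) ^+ 2 <= n%:R / LR) &
      [/\ (forall i, (n ^ 3 <= L)%N -> t 0 i ^+ 2 <= 2 * z 0 i ^+ 2),
      (forall i, t 0 i ^+ 2 <= 1) &
      (forall i, t 0 i ^+ 2 <= z 0 i ^+ 2 \/ 1 <= n%:R * z 0 i ^+ 2)]].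
Proof.
split; [exact: sum_t2|exact: t_int|exact: t_zero|exact: zt_diff|split; [exact: t2_le2|exact: t2_le1|exact: t2_cases]].
Qed.

End RoundProps.

Lemma pack (R : realType) (n L : nat) (z : 'rV[R]_n) : (0 < L)%N ->
  \sum_(i < n) z 0 i ^+ 2 = 1 ->
  let t := Round z L in
  [/\ \sum_i t 0 i ^+ 2 = 1, (forall i, exists k : int, t 0 i ^+ 2 = k%:~R / L%:R),
      (forall i, z 0 i = 0 -> t 0 i = 0), (forall i, (z 0 i - t 0 i) ^+ 2 <= n%:R / L%:R) &
      [/\ (forall i, (n ^ 3 <= L)%N -> t 0 i ^+ 2 <= 2 * z 0 i ^+ 2),
      (forall i, t 0 i ^+ 2 <= 1) &
      (forall i, t 0 i ^+ 2 <= z 0 i ^+ 2 \/ 1 <= n%:R * z 0 i ^+ 2)]].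
Proof.
move=> Lp z1 /=; have [s [hs hmax]] := @istarP _ _ _ z1.
exact: (@pack_s _ _ _ _ Lp z1 _ hs hmax).

Qed.


Lemma Round_id (R : realType) (n L : nat) (t : 'rV[R]_n) : (0 < L)%N ->
  (forall i, exists k : int, t 0 i ^+ 2 = k%:~R / L%:R) ->
  \sum_i t 0 i ^+ 2 = 1 -> Round t L = t.
Proof.
move=> Lp ht h1.
have LR0 : L%:R != 0 :> R by rewrite pnatr_eq0 -lt0n.
have r0 : round0 t L = t.
  apply/rowP => i; rewrite mxE; have [k hk] := ht i.
  by rewrite hk divfK // intrKfloor -hk sqrtr_sqr mulr_sg_norm.
have v1 : vnorm (round0 t L) ^+ 2 = 1.
  by rewrite r0 /vnorm sqr_sqrtr ?h1 // sumr_ge0 // => i _; exact: sqr_ge0.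
apply/rowP => i; rewrite /Round mxE v1 subrr addr0 r0 sqrtr_sqr mulr_sg_norm.
by case: ifP.
Qed.

Section Helpers.
Variables (R : realType) (n : nat).

Lemma sumsq_ge0 (v : 'rV[R]_n) (P : pred 'I_n) : 0 <= \sum_(i | P i) v 0 i ^+ 2.
Proof. by rewrite sumr_ge0 // => i _; exact: sqr_ge0. Qed.

Lemma vnormZ (c : R) (v : 'rV[R]_n) : 0 <= c -> vnorm (c *: v) = c * vnorm v.
Proof.
move=> c0; rewrite /vnorm.
under eq_bigr do rewrite mxE exprMn.
by rewrite -mulr_sumr sqrtrM ?sqr_ge0 // sqrtr_sqr ger0_norm.
Qed.

Lemma rnormZ (I : {set 'I_n}) (c : R) (v : 'rV[R]_n) : 0 <= c -> rnorm I (c *: v) = c * rnorm I v.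
Proof.
move=> c0; rewrite /rnorm.
under eq_bigr do rewrite mxE exprMn.
by rewrite -mulr_sumr sqrtrM ?sqr_ge0 // sqrtr_sqr ger0_norm.
Qed.

Lemma dotvZ (c c' : R) (v w : 'rV[R]_n) : dotv (c *: v) (c' *: w) = c * c' * dotv v w.
Proof.
rewrite /dotv mulr_sumr; apply: eq_bigr => i _; rewrite !mxE; ring.
Qed.

Lemma vnorm1 (v : 'rV[R]_n) : \sum_i v 0 i ^+ 2 = 1 -> vnorm v = 1.
Proof. by rewrite /vnorm => ->; rewrite sqrtr1. Qed.

Lemma normalize (a : 'rV[R]_n) : a != 0 ->
  0 < vnorm a /\ \sum_i ((vnorm a)^-1 *: a) 0 i ^+ 2 = 1.
Proof.
move=> a0.
have hs : 0 < \sum_i a 0 i ^+ 2.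
  rewrite lt_def sumsq_ge0 andbT; apply/eqP => h; move/eqP: a0; apply.
  apply/rowP => j; rewrite mxE.
  by apply/eqP; rewrite -sqrf_eq0; apply/eqP; apply: (psumr_eq0P _ h) => // i _; exact: sqr_ge0.
have N0 : 0 < vnorm a by rewrite /vnorm sqrtr_gt0.
split => //.
under eq_bigr do rewrite mxE exprMn.
rewrite -mulr_sumr -[X in _ * X](@sqr_sqrtr _ (\sum_i a 0 i ^+ 2)) ?ltW //.
by rewrite -/(vnorm a) -exprMn mulVf ?expr1n // gt_eqF.
Qed.

Lemma abs_le_rnorm (I : {set 'I_n}) (v : 'rV[R]_n) i : i \in I -> `|v 0 i| <= rnorm I v.
Proof.
move=> iI; apply: sq_le; first exact: sqrtr_ge0.
rewrite real_normK ?num_real // /rnorm sqr_sqrtr ?sumsq_ge0 //.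
by rewrite (bigD1 i) //= lerDl sumsq_ge0.
Qed.

End Helpers.

Lemma core3 (R : realType) (n : nat) (z w t u : 'rV[R]_n) (I : {set 'I_n}) (d : R) :
  (forall i, i \notin I -> z 0 i = 0 \/ w 0 i = 0) ->
  (forall i, z 0 i = 0 -> t 0 i = 0) ->
  (forall i, w 0 i = 0 -> u 0 i = 0) ->
  (forall i, `|z 0 i - t 0 i| <= d) ->
  (forall i, `|w 0 i - u 0 i| <= d) ->
  (forall i, t 0 i ^+ 2 <= 1) ->
  (forall i, t 0 i ^+ 2 <= z 0 i ^+ 2 \/ 1 <= n%:R * z 0 i ^+ 2) ->
  1 <= n%:R :> R -> 0 <= d ->
  `|dotv z w - dotv t u| <= n%:R * (2 * n%:R * d * Num.max (rnorm I z) (rnorm I w)).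
Proof.
move=> hI tz uw dz dw t1 tc n1 d0.
set M := Num.max _ _.
have M0 : 0 <= M by rewrite le_max sqrtr_ge0.
have hz : forall i, i \in I -> `|z 0 i| <= M.
  by move=> i iI; rewrite le_max abs_le_rnorm.
have hw : forall i, i \in I -> `|w 0 i| <= M.
  by move=> i iI; rewrite le_max orbC abs_le_rnorm.
rewrite /dotv -sumrB; apply: le_trans (ler_norm_sum _ _ _) _.
have -> : n%:R * (2 * n%:R * d * M) = \sum_(i < n) (2 * n%:R * d * M).
  by rewrite sumr_const card_ord mulr_natl.
apply: ler_sum => i _.
have B0 : 0 <= 2 * n%:R * d * M.
  by rewrite !mulr_ge0 // ?ler0n // (le_trans _ n1).
case: (boolP (i \in I)) => iI; last first.
  case: (hI i iI) => h.
    by rewrite h tz // !mul0r subrr normr0.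
  by rewrite h uw // !mulr0 subrr normr0.
have ht : `|t 0 i| <= n%:R * M.
  have hzi := hz i iI.
  case: (tc i) => h.
    have : `|t 0 i| <= `|z 0 i|.
      apply: sq_le => //; rewrite !real_normK ?num_real //.
    move=> h'; apply: le_trans h' _; apply: le_trans hzi _; rewrite ler_peMl //.
  have : `|t 0 i| <= n%:R * `|z 0 i|.
    apply: sq_le; first by rewrite mulr_ge0 ?ler0n.
    rewrite exprMn !real_normK ?num_real //.
    have := t1 i; have := sqr_ge0 (z 0 i); nra.
  move=> h'; apply: le_trans h' _; rewrite ler_wpM2l ?ler0n //.
have e : z 0 i * w 0 i - t 0 i * u 0 i = (z 0 i - t 0 i) * w 0 i + t 0 i * (w 0 i - u 0 i) by ring.
rewrite e; apply: le_trans (ler_normD _ _) _; rewrite !normrM.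
have h1 : `|z 0 i - t 0 i| * `|w 0 i| <= d * M by rewrite ler_pM ?normr_ge0 ?dz ?hw.
have h2 : `|t 0 i| * `|w 0 i - u 0 i| <= n%:R * M * d by rewrite ler_pM ?normr_ge0 ?dw.
have h3 : 0 <= (n%:R - 1) * (d * M) by rewrite mulr_ge0 ?mulr_ge0 // subr_ge0.
nra.
Qed.

Lemma core4 (R : realType) (n : nat) (z t : 'rV[R]_n) (I : {set 'I_n}) :
  (forall i, t 0 i ^+ 2 <= 2 * z 0 i ^+ 2) -> rnorm I t <= 2 * rnorm I z.
Proof.
move=> h; apply: sq_le; first by rewrite mulr_ge0 ?sqrtr_ge0.
rewrite exprMn /rnorm !sqr_sqrtr ?sumsq_ge0 //.
rewrite mulr_sumr; apply: ler_sum => i _.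
apply: le_trans (h i) _; rewrite ler_wpM2r ?sqr_ge0 //; lra.
Qed.

Theorem lemma3 (R : realType) (n : nat) (a b : 'rV[R]_n) (L : nat) :
  a != 0 -> b != 0 -> (0 < L)%N ->
  let a' := vnorm a *: Round ((vnorm a)^-1 *: a) L in
  let b' := vnorm b *: Round ((vnorm b)^-1 *: b) L in
  let I := [set i : 'I_n | (a 0 i != 0) && (b 0 i != 0)] in
  (* (1) *)
  (forall i : 'I_n,
     (exists k : int, a' 0 i ^+ 2 / vnorm a' ^+ 2 = k%:~R / L%:R) /\
     (exists k : int, b' 0 i ^+ 2 / vnorm b' ^+ 2 = k%:~R / L%:R)) /\
  (* (2) : for every sample number m and every seed, i.e. every choice of
     hash functions h^1..h^m with values in [0,1] *)
  (forall (m : nat) (h : 'I_m -> 'I_n * 'I_L -> R),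
     (forall i j, 0 <= h i j <= 1) ->
     sketch h a = sketch h a' /\ sketch h b = sketch h b') /\
  (* (3) *)
  (forall eps : R, 0 < eps < 1 -> 9 * n%:R ^+ 6 / eps ^+ 2 <= L%:R ->
     `|dotv a b - dotv a' b'| <=
       eps * Num.max (rnorm I a * vnorm b) (vnorm a * rnorm I b)) /\
  (* (4) *)
  ((n ^ 3 <= L)%N ->
     Num.max (rnorm I a' * vnorm b') (vnorm a' * rnorm I b') <=
       2 * Num.max (rnorm I a * vnorm b) (vnorm a * rnorm I b)).
Proof.
move=> a0 b0 Lp a' b' I.
have [Na za1] := @normalize _ _ _ a0.
have [Nb zb1] := @normalize _ _ _ b0.
have LR0 : 0 < L%:R :> R by rewrite ltr0n.
have n1 := @n_ge1 _ _ _ za1.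
have := @pack _ _ _ _ Lp za1 => /= -[ts1 tint tz tdiff [t2le t1 tc]].
have := @pack _ _ _ _ Lp zb1 => /= -[us1 uint uz udiff [u2le u1 uc]].
set N := vnorm a in Na za1 ts1 tint tz tdiff t2le t1 tc a' I *.
set N' := vnorm b in Nb zb1 us1 uint uz udiff u2le u1 uc b' I *.
set z := N^-1 *: a in za1 ts1 tint tz tdiff t2le t1 tc a' *.
set w := N'^-1 *: b in zb1 us1 uint uz udiff u2le u1 uc b' *.
set t := Round z L in ts1 tint tz tdiff t2le t1 tc a' *.
set u := Round w L in us1 uint uz udiff u2le u1 uc b' *.
have aE : a = N *: z by rewrite /z scalerA mulfV ?gt_eqF // scale1r.
have bE : b = N' *: w by rewrite /w scalerA mulfV ?gt_eqF // scale1r.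
have va' : vnorm a' = N by rewrite /a' vnormZ ?ltW // (@vnorm1 _ _ _ ts1) mulr1.
have vb' : vnorm b' = N' by rewrite /b' vnormZ ?ltW // (@vnorm1 _ _ _ us1) mulr1.
split.
  move=> i; split.
    have [k hk] := tint i; exists k; rewrite va' /a' mxE exprMn mulrAC mulfV ?mul1r //.
    by rewrite expf_neq0 // gt_eqF.
  have [k hk] := uint i; exists k; rewrite vb' /b' mxE exprMn mulrAC mulfV ?mul1r //.
  by rewrite expf_neq0 // gt_eqF.
split.
  move=> m h _.
  have Ra : Round ((vnorm a')^-1 *: a') L = Round ((vnorm a)^-1 *: a) L.
    rewrite va' /a' scalerA mulVf ?gt_eqF // scale1r.
    exact: (@Round_id _ _ _ _ Lp tint ts1).
  have Rb : Round ((vnorm b')^-1 *: b') L = Round ((vnorm b)^-1 *: b) L.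
    rewrite vb' /b' scalerA mulVf ?gt_eqF // scale1r.
    exact: (@Round_id _ _ _ _ Lp uint us1).
  by rewrite /sketch Ra Rb va' vb'.
have rIa : rnorm I a = N * rnorm I z by rewrite {1}aE rnormZ ?ltW.
have rIb : rnorm I b = N' * rnorm I w by rewrite {1}bE rnormZ ?ltW.
have rIa' : rnorm I a' = N * rnorm I t by rewrite /a' rnormZ ?ltW.
have rIb' : rnorm I b' = N' * rnorm I u by rewrite /b' rnormZ ?ltW.
have NN : 0 <= N * N' by rewrite mulr_ge0 ?ltW.
have e1 : forall x : R, N * x * N' = N * N' * x by move=> x; ring.
have e2 : forall x : R, N * (N' * x) = N * N' * x by move=> x; ring.
split.
  move=> eps /andP[e0 e1'] hL.
  have dab : dotv a b = N * N' * dotv z w by rewrite {1}aE {1}bE dotvZ.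
  have dab' : dotv a' b' = N * N' * dotv t u by rewrite /a' /b' dotvZ.
  rewrite dab dab' rIa rIb -mulrBr normrM ger0_norm // e1 e2 -maxr_pMr //.
  rewrite mulrCA ler_wpM2l //.
  pose d : R := Num.sqrt (n%:R / L%:R : R).
  have d0 : 0 <= d by rewrite /d sqrtr_ge0.
  have nL0 : 0 <= n%:R / L%:R :> R by rewrite divr_ge0 ?ler0n // ltW.
  have dz : forall i, `|z 0 i - t 0 i| <= d.
    by move=> i; apply: sq_le => //; rewrite real_normK ?num_real // sqr_sqrtr.
  have dw : forall i, `|w 0 i - u 0 i| <= d.
    by move=> i; apply: sq_le => //; rewrite real_normK ?num_real // sqr_sqrtr.
  have hI : forall i, i \notin I -> z 0 i = 0 \/ w 0 i = 0.
    move=> i; rewrite inE negb_and !negbK => /orP[] /eqP h; [left|right].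
      by rewrite /z mxE h mulr0.
    by rewrite /w mxE h mulr0.
  apply: le_trans (@core3 _ _ z w t u I d hI tz uz dz dw t1 tc n1 d0) _.
  set M := Num.max _ _.
  have M0 : 0 <= M by rewrite le_max sqrtr_ge0.
  rewrite (_ : n%:R * (2 * n%:R * d * M) = (n%:R * (2 * n%:R * d)) * M); last by ring.
  rewrite ler_wpM2r //; apply: sq_le; first exact: ltW.
  rewrite (_ : (n%:R * (2 * n%:R * d)) ^+ 2 = 4 * n%:R ^+ 4 * d ^+ 2); last by ring.
  rewrite sqr_sqrtr // mulrA ler_pdivrMr //.
  have ep2 : 0 < eps ^+ 2 by rewrite exprn_gt0.
  rewrite ler_pdivrMr // in hL.
  have h4 : 0 <= n%:R ^+ 4 * n%:R :> R by rewrite mulr_ge0 ?exprn_ge0 ?ler0n.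
  have h5 : n%:R ^+ 4 * n%:R <= n%:R ^+ 4 * n%:R * n%:R :> R by rewrite ler_peMr.
  have e6 : n%:R ^+ 6 = n%:R ^+ 4 * n%:R * n%:R :> R by ring.
  rewrite e6 in hL.
  have e7 : L%:R * eps ^+ 2 = eps ^+ 2 * L%:R :> R by ring.
  rewrite e7 in hL.
  lra.
move=> hL3.
rewrite va' vb' rIa' rIb' rIa rIb e1 e2 e1 e2 -!maxr_pMr // mulrCA ler_wpM2l //.
rewrite ge_max; apply/andP; split.
  apply: le_trans (@core4 _ _ _ _ I (fun i => t2le i hL3)) _; rewrite ler_wpM2l // le_max lexx //.
apply: le_trans (@core4 _ _ _ _ I (fun i => u2le i hL3)) _; rewrite ler_wpM2l // le_max lexx orbT //.
Qed.
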